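(* Let $U\subset\mathbb{R}^2$ be open, let $x:U\to\mathbb{R}^3$ be smooth, let $\xi:U\to S^2$ be a proper frontal, let $\Omega$ be a tangent moving basis of $\xi$ with $D\xi=\Omega\Delta_\Omega^T$, $\Delta_\Omega=(\delta_{ij})$. With $C_1=2\mathscr{F}_\Omega(\delta_{22}\mathscr{L}_\Omega-\delta_{12}\mathscr{M}_{1\Omega})-\mathscr{E}_\Omega\mathcal{M}$, $C_2=2\mathscr{G}_\Omega(\delta_{22}\mathscr{L}_\Omega-\delta_{12}\mathscr{M}_{1\Omega})-2\mathscr{E}_\Omega(\delta_{11}\mathscr{N}_\Omega-\delta_{21}\mathscr{M}_{2\Omega})$, $C_3=\mathscr{G}_\Omega\mathcal{M}-2\mathscr{F}_\Omega(\delta_{11}\mathscr{N}_\Omega-\delta_{21}\mathscr{M}_{2\Omega})$, where $\mathcal{M}=\delta_{11}\mathscr{M}_{1\Omega}-\delta_{21}\mathscr{L}_\Omega+\delta_{22}\mathscr{M}_{2\Omega}-\delta_{12}\mathscr{N}_\Omega$, the discriminant $\mathcal{D}=C_2^2-4C_1C_3$ of the equation $C_1b_1^2+C_2b_1b_2+C_3b_2^2=0$ is non-negative at every point of $U$, and $\mathcal{D}=0$ at a point if and only if $C_1=C_2=C_3=0$ at that point.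
   Context: A frontal is a smooth map $f:U\to\mathbb{R}^3$ admitting locally a smooth unit vector field orthogonal to $f_{u_1},f_{u_2}$; proper means its singular set has empty interior. A tangent moving basis of $\xi$ is a smooth $\Omega=(w_1\ w_2):U\to M_{3\times2}(\mathbb{R})$ with linearly independent columns whose span contains $\xi_{u_1},\xi_{u_2}$; then $D\xi=\Omega\Delta_\Omega^T$ for a unique smooth $\Delta_\Omega$. Coefficients: $\mathscr{E}_\Omega=\langle w_1,w_1\rangle$, $\mathscr{F}_\Omega=\langle w_1,w_2\rangle$, $\mathscr{G}_\Omega=\langle w_2,w_2\rangle$, $\mathscr{L}_\Omega=-\langle x_{u_1},w_1\rangle$, $\mathscr{M}_{2\Omega}=-\langle x_{u_1},w_2\rangle$, $\mathscr{M}_{1\Omega}=-\langle x_{u_2},w_1\rangle$, $\mathscr{N}_\Omega=-\langle x_{u_2},w_2\rangle$. *)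

(* Defs.v *)
From HB Require Import structures.
From mathcomp Require Import all_boot all_order all_algebra.
From mathcomp Require Import all_classical all_reals all_analysis.
Set Implicit Arguments. Unset Strict Implicit. Unset Printing Implicit Defensive.
Import Order.TTheory GRing.Theory Num.Theory.
Import numFieldNormedType.Exports.
Local Open Scope classical_set_scope.
Local Open Scope ring_scope.

Section Defs.
Variable R : realType.

(* points of R^2 are row vectors 'rV_2; vectors of R^3 are column vectors 'cV_3 *)

(* standard basis vector e_i of R^2 (i = 0,1 correspond to u_1,u_2) *)
Definition ebas (i : 'I_2) : 'rV[R]_2 := delta_mx 0 i.

Definition pd {V : normedModType R} (f : 'rV[R]_2 -> V) (i : 'I_2) :
  'rV[R]_2 -> V := fun u => 'D_(ebas i) f u.

Fixpoint iterpd {V : normedModType R} (s : seq 'I_2) (f : 'rV[R]_2 -> V) :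
  'rV[R]_2 -> V :=
  match s with
  | [::] => f
  | i :: s' => pd (iterpd s' f) i
  end.

Definition smooth_on {V : normedModType R} (W : set 'rV[R]_2)
  (f : 'rV[R]_2 -> V) : Prop :=
  forall (s : seq 'I_2) (u : 'rV[R]_2), W u ->
    (forall i, derivable (iterpd s f) u (ebas i)) /\
    {for u, continuous (iterpd s f)}.

Definition dot (a b : 'cV[R]_3) : R := \sum_(k < 3) a k 0 * b k 0.

Definition jac (f : 'rV[R]_2 -> 'cV[R]_3) (u : 'rV[R]_2) : 'M[R]_(3, 2) :=
  \matrix_(k < 3, j < 2) pd f j u k 0.

Definition frontal (U : set 'rV[R]_2) (f : 'rV[R]_2 -> 'cV[R]_3) : Prop :=
  smooth_on U f /\
  forall p, U p -> exists V : set 'rV[R]_2,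
    [/\ open V, V p, V `<=` U &
      exists nu : 'rV[R]_2 -> 'cV[R]_3, smooth_on V nu /\
        forall u, V u -> [/\ dot (nu u) (nu u) = 1,
                             dot (nu u) (pd f 0 u) = 0 &
                             dot (nu u) (pd f 1 u) = 0]].

Definition singular_set (U : set 'rV[R]_2) (f : 'rV[R]_2 -> 'cV[R]_3) :
  set 'rV[R]_2 := [set u | U u /\ (\rank (jac f u) < 2)%N].

Definition proper_frontal (U : set 'rV[R]_2) (f : 'rV[R]_2 -> 'cV[R]_3) :
  Prop := frontal U f /\ interior (singular_set U f) = set0.

Definition tangent_moving_basis (U : set 'rV[R]_2)
  (xi : 'rV[R]_2 -> 'cV[R]_3) (Om : 'rV[R]_2 -> 'M[R]_(3, 2)) : Prop :=
  smooth_on U Om /\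
  forall u, U u -> \rank (Om u) = 2%N /\ ((jac xi u)^T <= (Om u)^T)%MS.

Section Coefs.
Variables (x : 'rV[R]_2 -> 'cV[R]_3) (Om : 'rV[R]_2 -> 'M[R]_(3, 2))
          (Dl : 'rV[R]_2 -> 'M[R]_2) (u : 'rV[R]_2).

Definition w1 := col 0 (Om u).
Definition w2 := col 1 (Om u).
Definition cE := dot w1 w1.
Definition cF := dot w1 w2.
Definition cG := dot w2 w2.
Definition cL := - dot (pd x 0 u) w1.
Definition cM2 := - dot (pd x 0 u) w2.
Definition cM1 := - dot (pd x 1 u) w1.
Definition cN := - dot (pd x 1 u) w2.
Definition d11 := Dl u 0 0.
Definition d12 := Dl u 0 1.
Definition d21 := Dl u 1 0.
Definition d22 := Dl u 1 1.
Definition calM := d11 * cM1 - d21 * cL + d22 * cM2 - d12 * cN.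
Definition C1 := 2 * cF * (d22 * cL - d12 * cM1) - cE * calM.
Definition C2 := 2 * cG * (d22 * cL - d12 * cM1)
                 - 2 * cE * (d11 * cN - d21 * cM2).
Definition C3 := cG * calM - 2 * cF * (d11 * cN - d21 * cM2).
Definition discr := C2 ^+ 2 - 4 * C1 * C3.
End Coefs.
End Defs.

(* Main.v *)
Require Import Defs.
From HB Require Import structures.
From mathcomp Require Import all_boot all_order all_algebra.
From mathcomp Require Import all_classical all_reals all_analysis.
From mathcomp Require Import ring.
Import Order.TTheory GRing.Theory Num.Theory.
Import numFieldNormedType.Exports.
Local Open Scope classical_set_scope.
Local Open Scope ring_scope.


Lemma alg (R : realType) (E F G L M1 M2 N a b c d : R) :
  0 < E -> 0 < G -> 0 < E * G - F ^+ 2 ->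
  let M := a * M1 - c * L + d * M2 - b * N in
  let C1 := 2 * F * (d * L - b * M1) - E * M in
  let C2 := 2 * G * (d * L - b * M1) - 2 * E * (a * N - c * M2) in
  let C3 := G * M - 2 * F * (a * N - c * M2) in
  0 <= C2 ^+ 2 - 4 * C1 * C3 /\
  (C2 ^+ 2 - 4 * C1 * C3 = 0 <-> [/\ C1 = 0, C2 = 0 & C3 = 0]).
Proof.
move=> E0 G0 H M C1 C2 C3.
set A := d * L - b * M1; set B := a * N - c * M2.
set X := G * A - E * B; set Y := E * G * M - F * G * A - F * E * B.
have EG0 : 0 < E * G by rewrite mulr_gt0.
have key : E * G * (C2 ^+ 2 - 4 * C1 * C3) =
   4 * ((E * G - F ^+ 2) * X ^+ 2 + Y ^+ 2).
  by rewrite /C1 /C2 /C3 /X /Y /M /A /B; ring.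
have S0 : 0 <= (E * G - F ^+ 2) * X ^+ 2 + Y ^+ 2.
  by rewrite addr_ge0 // ?sqr_ge0 // mulr_ge0 // ?sqr_ge0 // ltW.
split.
  by rewrite -(pmulr_rge0 _ EG0) key mulr_ge0.
split; last by case=> -> -> ->; ring.
move=> D0.
have : (E * G - F ^+ 2) * X ^+ 2 + Y ^+ 2 == 0.
  have := key; rewrite D0 mulr0 => /esym /eqP.
  by rewrite mulf_eq0 pnatr_eq0.
have h1 : 0 <= (E * G - F ^+ 2) * X ^+ 2 by rewrite mulr_ge0 ?sqr_ge0 ?ltW.
rewrite paddr_eq0 ?sqr_ge0 //.
rewrite mulf_eq0 (gt_eqF H) /= !sqrf_eq0 => /andP[/eqP X0 /eqP Y0].
have EGn : E * G != 0 by rewrite gt_eqF.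
split.
- apply/eqP; rewrite -(mulrI_eq0 _ (mulfI EGn)).
  have -> : E * G * C1 = - E * Y + E * F * X by rewrite /C1 /X /Y /M /A /B; ring.
  by rewrite X0 Y0 !mulr0 addr0.
- have -> : C2 = 2 * X by rewrite /C2 /X /A /B; ring.
  by rewrite X0 mulr0.
- apply/eqP; rewrite -(mulrI_eq0 _ (mulfI EGn)).
  have -> : E * G * C3 = G * Y + G * F * X by rewrite /C3 /X /Y /M /A /B; ring.
  by rewrite X0 Y0 !mulr0 addr0.
Qed.


Lemma sum3 (R : nzRingType) (f : 'I_3 -> R) : \sum_(k < 3) f k = f 0 + f 1 + f 2.
Proof. rewrite !big_ord_recl big_ord0 addr0 addrA.
by congr (f _ + f _ + f _); apply: val_inj. Qed.
Lemma sum2 (R : nzRingType) (f : 'I_2 -> R) : \sum_(k < 2) f k = f 0 + f 1.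
Proof. rewrite !big_ord_recl big_ord0 addr0.
by congr (f _ + f _); apply: val_inj. Qed.

Lemma posq (R : realType) (A : 'M[R]_(3, 2)) (a b : R) :
  \rank A = 2%N -> (a != 0) || (b != 0) ->
  0 < a ^+ 2 * dot (col 0 A) (col 0 A) + 2 * a * b * dot (col 0 A) (col 1 A)
      + b ^+ 2 * dot (col 1 A) (col 1 A).
Proof.
move=> rk ab.
pose v : 'rV[R]_2 := \row_j (if j == 0 then a else b).
pose y := v *m A^T.
have -> : a ^+ 2 * dot (col 0 A) (col 0 A) + 2 * a * b * dot (col 0 A) (col 1 A)
      + b ^+ 2 * dot (col 1 A) (col 1 A) = \sum_(k < 3) (y 0 k) ^+ 2.
  rewrite /y /dot !sum3 !mxE !sum2 !mxE /=.
  ring.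
rewrite lt_def sumr_ge0 ?andbT; last by move=> k _; rewrite sqr_ge0.
apply/negP => /eqP /psumr_eq0P H.
have y0 : y = 0.
  apply/matrixP => i k; rewrite (ord1 i) [RHS]mxE.
  by apply/eqP; rewrite -sqrf_eq0; apply/eqP; apply: H => // j _; rewrite sqr_ge0.
have rf : row_free A^T by rewrite /row_free mxrank_tr rk.
have v0 : v = 0.
  by apply: (row_free_inj rf); rewrite /= -/y y0 mul0mx.
have va : v 0 0 = 0 by rewrite v0 mxE.
have vb : v 0 1 = 0 by rewrite v0 mxE.
by move: va vb ab; rewrite !mxE /= => -> ->; rewrite eqxx.
Qed.

Theorem proposition4p5 (R : realType) (U : set 'rV[R]_2)
  (x xi : 'rV[R]_2 -> 'cV[R]_3) (Om : 'rV[R]_2 -> 'M[R]_(3, 2))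
  (Dl : 'rV[R]_2 -> 'M[R]_2) :
  open U ->
  smooth_on U x ->
  (forall u, U u -> dot (xi u) (xi u) = 1) ->
  proper_frontal U xi ->
  tangent_moving_basis U xi Om ->
  smooth_on U Dl ->
  (forall u, U u -> jac xi u = Om u *m (Dl u)^T) ->
  forall u, U u ->
    0 <= discr x Om Dl u /\
    (discr x Om Dl u = 0 <->
       [/\ C1 x Om Dl u = 0, C2 x Om Dl u = 0 & C3 x Om Dl u = 0]).
Proof.
move=> _ _ _ _ [_ tmb] _ _ u Uu.
have [rk _] := tmb u Uu.
set E := cE Om u; set F := cF Om u; set G := cG Om u.
have hE : 0 < E.
  have := @posq R (Om u) 1 0 rk; rewrite oner_neq0 => /(_ isT).
  by have -> : forall e f g : R, 1 ^+ 2 * e + 2 * 1 * 0 * f + 0 ^+ 2 * g = e by move=> *; ring.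
have hG : 0 < G.
  have := @posq R (Om u) 0 1 rk; rewrite oner_neq0 orbT => /(_ isT).
  by have -> : forall e f g : R, 0 ^+ 2 * e + 2 * 0 * 1 * f + 1 ^+ 2 * g = g by move=> *; ring.
have hD : 0 < E * G - F ^+ 2.
  have := @posq R (Om u) F (- E) rk; rewrite oppr_eq0 (gt_eqF hE) orbT => /(_ isT).
  have -> : forall e f g : R, f ^+ 2 * e + 2 * f * - e * f + (- e) ^+ 2 * g = e * (e * g - f ^+ 2) by move=> *; ring.
  by rewrite pmulr_rgt0.
have := @alg R E F G (cL x Om u) (cM1 x Om u) (cM2 x Om u) (cN x Om u) (Dl u 0 0) (Dl u 0 1) (Dl u 1 0) (Dl u 1 1) hE hG hD.
rewrite /discr /C1 /C2 /C3 /calM /d11 /d12 /d21 /d22.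
move=> H; exact H.
Qed.
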